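(* Let $F$ be a non-archimedean local field with ring of integers $\mathcal{O}$ and uniformizer $\varpi$, let $G=\mathrm{GL}_{2n}(F)$ with diagonal torus $T$, upper triangular Borel subgroup $B$ and Weyl group $W$ (the permutation matrices), and let $\Delta$ be the set of simple roots determined by $B$. Let $S,T'\subset\Delta$ and let $w\in W$ be such that $wT'>0$ and $w^{-1}S>0$. Then \[\operatorname{Levi}(w^{-1}P_{\Delta,S}w)\cap J_{\Delta,T'}=J_{w^{-1}S,\;T'\cap w^{-1}S}.\]
   Context: For sets $S,T$ of roots of $G$ with respect to the diagonal torus, $P_{S,T}$ denotes the subgroup of $G$ whose Lie algebra is $\mathfrak{p}_{S,T}=\mathfrak{t}\oplus\bigoplus_{\alpha}\mathfrak{g}_\alpha$, the sum being over all roots $\alpha$ lying in $\mathbb{Z}_{\geq 0}S-\mathbb{Z}_{\geq 0}T$ (i.e. expressible as a nonnegative integer combination of elements of $S$ minus a nonnegative integer combination of elements of $T$); here $\mathfrak{t}$ is the Lie algebra of the diagonal torus and $\mathfrak{g}_\alpha$ the root space. Thus $P_{\Delta,\emptyset}=B$, $P_{\Delta,\Delta}=G$, $P_{\Delta,S}$ is the standard parabolic subgroup associated with $S\subset\Delta$, and its Levi subgroup is $P_{S,S}$. One sets $J_{S,T}=\{g\in P_{S,S}(\mathcal{O}) : g \bmod \varpi\in P_{S,T}(\mathcal{O}/\varpi)\}$ (so $J_{\Delta,\emptyset}$ is the Iwahori subgroup and $J_{\Delta,\Delta}=\mathrm{GL}_{2n}(\mathcal{O})$). For a set $R$ of roots,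 $wR>0$ means $w$ maps every root in $R$ to a positive root. *)

(* Defs.v *)
From HB Require Import structures.
From mathcomp Require Import all_boot all_order all_algebra all_fingroup.
Set Implicit Arguments. Unset Strict Implicit. Unset Printing Implicit Defensive.
Import Order.TTheory GRing.Theory Num.Theory.
Local Open Scope ring_scope.

(* Non-archimedean local fields: complete discretely valued fields with    *)
(* finite residue field.  The valuation nv is only meaningful on nonzero   *)
(* elements (nv 0 = +oo by convention, handled by the predicates below).   *)
Record nonarch_local_field (F : fieldType) := NALF {
  nv : F -> int;
  nvM : forall x y : F, x != 0 -> y != 0 -> nv (x * y) = nv x + nv y;
  nvD : forall x y : F, x != 0 -> y != 0 -> x + y != 0 ->
          (nv x <= nv (x + y)) \/ (nv y <= nv (x + y));
  nv_discrete : exists p : F, p != 0 /\ nv p = 1;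
  nv_residue_finite : exists s : seq F, forall x : F,
      (x == 0) || (0 <= nv x) ->
      exists2 r, r \in s & (x == r) || (0 < nv (x - r));
  nv_complete : forall u : nat -> F,
      (forall k : int, exists N : nat, forall p q : nat, (N <= p)%N -> (N <= q)%N ->
          u p = u q \/ k <= nv (u p - u q)) ->
      exists l : F, forall k : int, exists N : nat, forall p : nat, (N <= p)%N ->
          u p = l \/ k <= nv (u p - l)
}.

Definition inO (F : fieldType) (V : nonarch_local_field F) (x : F) : Prop :=
  x = 0 \/ 0 <= nv V x.

Definition uniformizer (F : fieldType) (V : nonarch_local_field F) (pi : F) : Prop :=
  pi != 0 /\ nv V pi = 1.

(* x lies in the ideal pi O, i.e. x = 0 in O/pi *)
Definition in_piO (F : fieldType) (V : nonarch_local_field F) (pi x : F) : Prop :=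
  exists y : F, inO V y /\ x = pi * y.

(* Roots of GL_m w.r.t. the diagonal torus: e_i - e_j, encoded as (i,j),   *)
(* i != j.  rvec a is the character e_{a.1} - e_{a.2} in Z^m.              *)
Definition is_root (m : nat) (a : 'I_m * 'I_m) : bool := a.1 != a.2.

Definition rvec (m : nat) (a : 'I_m * 'I_m) (k : 'I_m) : int :=
  (k == a.1)%:R - (k == a.2)%:R.

Definition in_cone (m : nat) (S T : {set 'I_m * 'I_m}) (a : 'I_m * 'I_m) : Prop :=
  exists c d : 'I_m * 'I_m -> nat, forall k : 'I_m,
    rvec a k = \sum_(b in S) (c b)%:R * rvec b k - \sum_(b in T) (d b)%:R * rvec b k.

Definition simple_roots (m : nat) : {set 'I_m * 'I_m} :=
  [set a | val a.2 == (val a.1).+1].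

Definition pos_root (m : nat) (a : 'I_m * 'I_m) : bool := (val a.1 < val a.2)%N.

(* The Weyl element w attached to s : 'S_m is the permutation matrix perm_mx s
   (entries (perm_mx s) i j = (s i == j)).  Ad(w) sends the root space of
   (i,j) to that of (s^-1 i, s^-1 j); this is the action of w on roots. *)
Definition weyl_mx (F : fieldType) (m : nat) (s : 'S_m) : 'M[F]_m := perm_mx s.

Definition weyl_act (m : nat) (s : 'S_m) (a : 'I_m * 'I_m) : 'I_m * 'I_m :=
  ((s^-1)%g a.1, (s^-1)%g a.2).

Definition weyl_set (m : nat) (s : 'S_m) (R : {set 'I_m * 'I_m}) : {set 'I_m * 'I_m} :=
  [set weyl_act s a | a in R].

(* F-points of P_{S,T}: invertible matrices supported on t + sum of the
   root spaces g_a with a in Z_{>=0}S - Z_{>=0}T. *)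
Definition in_P_F (F : fieldType) (m : nat) (S T : {set 'I_m * 'I_m})
  (g : 'M[F]_m) : Prop :=
  g \in unitmx /\
  forall i j : 'I_m, i != j -> ~ in_cone S T (i, j) -> g i j = 0.

(* Levi(w^{-1} P_{Delta,S} w) (Levi containing the diagonal torus):
   the conjugate w^{-1} P_{S,S} w of the standard Levi P_{S,S}. *)
Definition Levi_conj_parabolic (F : fieldType) (m : nat) (s : 'S_m)
  (S : {set 'I_m * 'I_m}) (g : 'M[F]_m) : Prop :=
  exists p : 'M[F]_m, in_P_F S S p /\
    g = invmx (weyl_mx F s) *m p *m weyl_mx F s.

(* J_{S,T} = { g in P_{S,S}(O) : g mod pi in P_{S,T}(O/pi) } *)
Definition J_ST (F : fieldType) (V : nonarch_local_field F) (pi : F) (m : nat)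
  (S T : {set 'I_m * 'I_m}) (g : 'M[F]_m) : Prop :=
  [/\ (forall i j : 'I_m, inO V (g i j)),
      (\det g != 0 /\ inO V (\det g) /\ inO V (\det g)^-1),
      (forall i j : 'I_m, i != j -> ~ in_cone S S (i, j) -> g i j = 0)
    & (forall i j : 'I_m, i != j -> ~ in_cone S T (i, j) -> in_piO V pi (g i j))].

(* Main.v *)
Require Import Defs.
From HB Require Import structures.
From mathcomp Require Import all_boot all_order all_algebra all_fingroup.
From mathcomp Require Import ring zify.
From Stdlib Require Import Classical.
Import Order.TTheory GRing.Theory Num.Theory.
Local Open Scope ring_scope.

Module Helpers.
Set Implicit Arguments. Unset Strict Implicit. Unset Printing Implicit Defensive.


Section Cone.
Variable m : nat.
Implicit Types X Y : {set 'I_m * 'I_m}.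

Lemma rvec_add (x y z : 'I_m) k : rvec (x, z) k = rvec (x, y) k + rvec (y, z) k.
Proof. rewrite /rvec /=; ring. Qed.

Lemma cone_refl X Y (x : 'I_m) : in_cone X Y (x, x).
Proof.
exists (fun _ => 0%N), (fun _ => 0%N) => k.
rewrite /rvec /= subrr !big1 ?subrr // => b _; by rewrite mul0r.
Qed.

Lemma sum_natD (A : {set 'I_m * 'I_m}) (c1 c2 : 'I_m * 'I_m -> nat) k :
  \sum_(b in A) (c1 b + c2 b)%:R * rvec b k =
  \sum_(b in A) (c1 b)%:R * rvec b k + \sum_(b in A) (c2 b)%:R * rvec b k.
Proof. rewrite -big_split /=; apply: eq_bigr => b _; by rewrite natrD mulrDl. Qed.

Lemma cone_add X Y (x y z : 'I_m) :
  in_cone X Y (x, y) -> in_cone X Y (y, z) -> in_cone X Y (x, z).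
Proof.
move=> [c1 [d1 H1]] [c2 [d2 H2]].
exists (fun b => c1 b + c2 b)%N, (fun b => d1 b + d2 b)%N => k.
rewrite (rvec_add _ y) H1 H2.
rewrite !sum_natD; ring.
Qed.

Lemma cone_gen X Y b : b \in X -> in_cone X Y b.
Proof.
move=> bX.
exists (fun b' => (b' == b : nat)), (fun _ => 0%N) => k.
rewrite [X in _ - X]big1; last by move=> ? _; rewrite mul0r.
rewrite subr0 (bigD1 b) //= eqxx mul1r big1 ?addr0 // => b' /andP [_ /negbTE ->].
by rewrite mul0r.
Qed.

Lemma rvec_swap (a : 'I_m * 'I_m) k : rvec (a.2, a.1) k = - rvec a k.
Proof. rewrite /rvec /=; ring. Qed.

Lemma cone_swap X Y a : in_cone X Y a -> in_cone Y X (a.2, a.1).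
Proof.
move=> [c [d H]]; exists d, c => k.
by rewrite rvec_swap H opprB.
Qed.

Lemma cone_neg X Y b : b \in Y -> in_cone X Y (b.2, b.1).
Proof. by move=> bY; apply: cone_swap; apply: cone_gen. Qed.

Lemma cone_sep X Y a (f : 'I_m -> int) : in_cone X Y a ->
  (forall b, b \in X -> f b.2 <= f b.1) ->
  (forall b, b \in Y -> f b.1 <= f b.2) -> f a.2 <= f a.1.
Proof.
move=> [c [d H]] HX HY.
have E : forall b : 'I_m * 'I_m, \sum_k f k * rvec b k = f b.1 - f b.2.
  move=> b; rewrite /rvec.
  under eq_bigr do rewrite mulrBr.
  rewrite sumrB.
  rewrite (bigD1 b.1) //= eqxx mulr1 big1 ?addr0; last first.
    by move=> k /negbTE ->; rewrite mulr0.
  rewrite (bigD1 b.2) //= eqxx mulr1 big1 ?addr0 //.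
  by move=> k /negbTE ->; rewrite mulr0.
have := E a.
under eq_bigr do rewrite H mulrBr !mulr_sumr.
rewrite sumrB exchange_big [X in _ - X = _]exchange_big /= => Ea.
rewrite -subr_ge0 -Ea subr_ge0.
apply: (@le_trans _ _ 0).
  rewrite sumr_le0 // => b bY.
  under eq_bigr do rewrite mulrCA; rewrite -mulr_sumr E.
  by apply: mulr_ge0_le0; [exact: ler0n | rewrite subr_le0; exact: HY].
rewrite sumr_ge0 // => b bX.
under eq_bigr do rewrite mulrCA; rewrite -mulr_sumr E.
by apply: mulr_ge0; [exact: ler0n | rewrite subr_ge0; exact: HX].
Qed.

Lemma act_eq (t : 'S_m) (k x : 'I_m) : (k == (t^-1)%g x) = (t k == x).
Proof. by apply/eqP/eqP => [->|<-]; rewrite ?permKV ?permK. Qed.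

Lemma rvec_act (t : 'S_m) b k : rvec (weyl_act t b) k = rvec b (t k).
Proof. by rewrite /rvec /weyl_act /= !act_eq. Qed.

Lemma actK (t : 'S_m) b : weyl_act (t^-1)%g (weyl_act t b) = b.
Proof. by case: b => x y; rewrite /weyl_act /= invgK !permKV. Qed.

Lemma act_inj (t : 'S_m) : injective (weyl_act t).
Proof. exact: can_inj (actK t). Qed.

Lemma cone_act X Y a (t : 'S_m) :
  in_cone X Y a -> in_cone (weyl_set t X) (weyl_set t Y) (weyl_act t a).
Proof.
move=> [c [d H]].
exists (fun b => c (weyl_act (t^-1)%g b)), (fun b => d (weyl_act (t^-1)%g b)) => k.
rewrite /weyl_set !big_imset /=; try by move=> ? ? _ _; apply: act_inj.
rewrite rvec_act H; congr (_ - _); apply: eq_bigr => b _; by rewrite actK rvec_act.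
Qed.

Lemma chain (R : 'I_m -> 'I_m -> Prop) :
  (forall x, R x x) -> (forall x y z, R x y -> R y z -> R x z) ->
  forall p q : 'I_m,
  (forall b : 'I_m * 'I_m, val b.2 = (val b.1).+1 -> (p <= b.1)%N -> (b.2 <= q)%N -> R b.1 b.2) ->
  forall x y : 'I_m, (p <= x)%N -> (x <= y)%N -> (y <= q)%N -> R x y.
Proof.
move=> Rr Rt p q Hb x y px xy yq.
suff: forall k (y : 'I_m), val y = (x + k)%N -> (y <= q)%N -> R x y.
  by move=> /(_ (y - x)%N y); apply => //; rewrite subnKC.
elim=> [|k IH] z zE zq.
  by have -> : z = x by apply: val_inj; rewrite zE addn0.
have zm : (x + k < m)%N by apply: ltnW; have := ltn_ord z; rewrite zE addnS.
apply: (Rt _ (Ordinal zm)); first by apply: IH => //=; apply: leq_trans zq; rewrite zE addnS leqnSn.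
apply: (Hb (Ordinal zm, z)) => //=; first by rewrite zE addnS.
by apply: leq_trans px _; apply: leq_addr.
Qed.
End Cone.



Section Sep.
Variable m : nat.
Implicit Types X Y : {set 'I_m * 'I_m}.

Definition fk (k : 'I_m) (x : 'I_m) : int := ((x <= k)%N : nat)%:R.

Lemma fk_pos k (b : 'I_m * 'I_m) : (b.1 < b.2)%N -> fk k b.2 <= fk k b.1.
Proof.
move=> h; rewrite /fk ler_nat.
case: (leqP b.2 k) => // h2.
by rewrite (leq_trans (ltnW h) h2).
Qed.

Lemma fk_simple (b c : 'I_m * 'I_m) : val b.2 = (val b.1).+1 -> val c.2 = (val c.1).+1 ->
  b != c -> fk c.1 b.1 = fk c.1 b.2.
Proof.
move=> hb hc bc; rewrite /fk hb.
have ne : val b.1 != val c.1.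
  apply: contra bc => /eqP e; apply/eqP.
  case: b c hb hc e => [b1 b2] [c1 c2] /= hb hc e.
  have e1 : b1 = c1 by apply: val_inj.
  have e2 : b2 = c2 by apply: val_inj; rewrite /= hb hc e.
  by rewrite e1 e2.
by rewrite ltn_neqAle ne.
Qed.

Lemma sep_pos X Y (i j : 'I_m) (b : 'I_m * 'I_m) :
  Y \subset simple_roots m -> (forall c, c \in X -> (c.1 < c.2)%N) ->
  in_cone X Y (i, j) -> val b.2 = (val b.1).+1 ->
  (j <= b.1)%N -> (b.2 <= i)%N -> b \in Y.
Proof.
move=> YS Xp hc hb jb bi; apply/negPn/negP => bY.
have: fk b.1 j <= fk b.1 i.
  apply: (cone_sep (f := fk b.1) hc) => c cY.
  - by apply: fk_pos; apply: Xp.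
  - have := subsetP YS c cY; rewrite inE => /eqP hc'.
    rewrite (fk_simple hc' hb) //; apply: contraNneq bY => <-; done.
rewrite /fk jb /= leqNgt.
by rewrite hb in bi; rewrite bi.
Qed.

Lemma sep_span X Y (p q : 'I_m) (b : 'I_m * 'I_m) :
  X \subset simple_roots m -> Y \subset simple_roots m ->
  in_cone X Y (p, q) -> val b.2 = (val b.1).+1 -> b \notin X -> b \notin Y ->
  (q <= b.1)%N -> (b.2 <= p)%N -> False.
Proof.
move=> XS YS hc hb bX bY qb bp.
have: fk b.1 q <= fk b.1 p.
  apply: (cone_sep (f := fk b.1) hc) => c cY.
  - have := subsetP XS c cY; rewrite inE => /eqP hc'.
    rewrite (fk_simple hc' hb) //; apply: contraNneq bX => <-; done.
  - have := subsetP YS c cY; rewrite inE => /eqP hc'.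
    rewrite (fk_simple hc' hb) //; apply: contraNneq bY => <-; done.
rewrite /fk qb /= leqNgt.
by rewrite hb in bp; rewrite bp.
Qed.

Lemma simpleE (b : 'I_m * 'I_m) : (b \in simple_roots m) = (val b.2 == (val b.1).+1).
Proof. by rewrite inE. Qed.

Lemma cone_all (i j : 'I_m) : in_cone (simple_roots m) (simple_roots m) (i, j).
Proof.
have H : forall i j : 'I_m, (i <= j)%N -> in_cone (simple_roots m) (simple_roots m) (i, j).
  move=> x y xy.
  apply: (@chain m (fun x y => in_cone (simple_roots m) (simple_roots m) (x, y))
    (@cone_refl _ _ _) (@cone_add _ _ _) x y) => // [[b1 b2]] /= hb _ _.
  by apply: cone_gen; rewrite simpleE /= hb.
case: (leqP i j) => h; first exact: H.
exact: (cone_swap (H _ _ (ltnW h))).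
Qed.

End Sep.



Lemma actKV m (t : 'S_m) b : weyl_act t (weyl_act (t^-1)%g b) = b.
Proof. by case: b => x y; rewrite /weyl_act /= invgK !permK. Qed.

Lemma wsK m (t : 'S_m) X : weyl_set t (weyl_set (t^-1)%g X) = X.
Proof.
rewrite /weyl_set -imset_comp (eq_imset (g := id)) ?imset_id // => b /=.
exact: actKV.
Qed.

Lemma actV m (t : 'S_m) b : weyl_act (t^-1)%g b = (t b.1, t b.2).
Proof. by rewrite /weyl_act invgK. Qed.

Lemma mono m (g : 'I_m -> nat) (p q : 'I_m) :
  (forall c : 'I_m * 'I_m, val c.2 = (val c.1).+1 -> (p <= c.1)%N -> (c.2 <= q)%N -> (g c.1 < g c.2)%N) ->
  forall x y : 'I_m, (p <= x)%N -> (x <= y)%N -> (y <= q)%N ->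
  (g x <= g y)%N /\ ((x < y)%N -> (g x < g y)%N).
Proof.
move=> Hc x y px xy yq.
have [_ H1 H2] : [/\ (x <= y)%N, (g x <= g y)%N & ((x < y)%N -> (g x < g y)%N)].
  apply: (@chain m (fun x y => [/\ (x <= y)%N, (g x <= g y)%N & ((x < y)%N -> (g x < g y)%N)]) _ _ p q) => //.
  - by move=> z; rewrite !leqnn ltnn.
  - move=> a b c [ab gab sab] [bc gbc sbc]; split; first exact: leq_trans ab bc.
      exact: leq_trans gab gbc.
    move=> ac; case: (ltnP a b) => h.
      by apply: leq_trans (sab h) gbc.
    have eab : a = b by apply/val_inj/eqP; rewrite eqn_leq ab h.
    by subst b; apply: sbc.
  - move=> c hc pc cq; have := Hc c hc pc cq; rewrite hc => h; split => //.
    exact: ltnW h.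
by split.
Qed.

Section Main.
Variable m : nat.
Variables S T : {set 'I_m * 'I_m}.
Variable s : 'S_m.
Hypothesis SS : S \subset simple_roots m.
Hypothesis TS : T \subset simple_roots m.
Hypothesis hT : forall a, a \in T -> pos_root (weyl_act s a).
Hypothesis hS : forall a, a \in S -> pos_root (weyl_act (s^-1)%g a).

Local Notation S' := (weyl_set (s^-1)%g S).
Local Notation D := (simple_roots m).

Lemma S'pos c : c \in S' -> (c.1 < c.2)%N.
Proof. by case/imsetP => a aS ->; have := hS aS. Qed.

Lemma Dpos c : c \in D -> (c.1 < c.2)%N.
Proof. by rewrite simpleE => /eqP ->. Qed.

Lemma inS' c : c \in S -> (s c.1, s c.2) \in S'.
Proof. by move=> cS; rewrite -actV; apply: imset_f. Qed.

Lemma coneBl (i j : 'I_m) : in_cone S' (T :&: S') (i, j) -> in_cone D T (i, j).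
Proof.
move=> hc.
case: (leqP i j) => h.
  apply: (@chain m (fun x y => in_cone D T (x, y)) (@cone_refl _ _ _) (@cone_add _ _ _) i j) => // [[b1 b2]] /= hb _ _.
  by apply: cone_gen; rewrite simpleE /= hb.
apply: (cone_swap (a := (j, i))).
apply: (@chain m (fun x y => in_cone T D (x, y)) (@cone_refl _ _ _) (@cone_add _ _ _) j i) => //; last exact: ltnW.
move=> [b1 b2] /= hb jb bi; apply: cone_gen.
have := sep_pos (b := (b1, b2)) _ S'pos hc hb jb bi.
by rewrite inE => /(_ (subset_trans (subsetIl _ _) TS)) /andP [].
Qed.

Lemma coneBr (i j : 'I_m) : in_cone S' S' (i, j) -> in_cone D T (i, j) ->
  in_cone S' (T :&: S') (i, j).
Proof.
move=> h1 h2.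
have h3 : in_cone S S ((s^-1)%g i, (s^-1)%g j).
  by have := cone_act s h1; rewrite wsK.
have Ei : i = s ((s^-1)%g i) by rewrite permKV.
have Ej : j = s ((s^-1)%g j) by rewrite permKV.
move: h3; set i' := (s^-1)%g i; set j' := (s^-1)%g j => h3.
case: (leqP i' j') => h.
  have blk : forall c : 'I_m * 'I_m, val c.2 = (val c.1).+1 -> (i' <= c.1)%N -> (c.2 <= j')%N -> c \in S.
    move=> c hc c1 c2; apply/negPn/negP => cS.
    exact: (sep_span SS SS (cone_swap h3) hc cS cS c1 c2).
  rewrite Ei Ej.
  apply: (@chain m (fun x y => in_cone S' (T :&: S') (s x, s y)) _ _ i' j') => //.
  - by move=> x; apply: cone_refl.
  - by move=> x y z; apply: cone_add.
  - by move=> c hc c1 c2; apply: cone_gen; apply: inS'; apply: blk.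
have blk : forall c : 'I_m * 'I_m, val c.2 = (val c.1).+1 -> (j' <= c.1)%N -> (c.2 <= i')%N -> c \in S.
  move=> c hc c1 c2; apply/negPn/negP => cS.
  exact: (sep_span SS SS h3 hc cS cS c1 c2).
have monS := @mono m (fun z => val (s z)) j' i'.
have {}monS : forall x y : 'I_m, (j' <= x)%N -> (x <= y)%N -> (y <= i')%N ->
    (s x <= s y)%N /\ ((x < y)%N -> (s x < s y)%N).
  apply: monS => c hc c1 c2; have := hS (blk c hc c1 c2); by rewrite /pos_root actV.
have core : forall c : 'I_m * 'I_m, val c.2 = (val c.1).+1 -> (j' <= c.1)%N -> (c.2 <= i')%N ->
    (s c.1, s c.2) \in T.
  move=> c hc c1 c2.
  have cS := blk c hc c1 c2.
  have xy : (s c.1 < s c.2)%N by have := hS cS; rewrite /pos_root actV.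
  have c12 : (c.1 <= c.2)%N by rewrite hc.
  have [jx _] := monS j' c.1 (leqnn _) c1 (leq_trans c12 c2).
  have [yi _] := monS c.2 i' (leq_trans c1 c12) c2 (leqnn _).
  rewrite -/j' -Ej in jx; rewrite -/i' -Ei in yi.
  have ji : (j < i)%N by apply: leq_ltn_trans jx (leq_trans xy yi).
  have Tall : forall e : 'I_m * 'I_m, val e.2 = (val e.1).+1 -> (j <= e.1)%N -> (e.2 <= i)%N -> e \in T.
    move=> e he e1 e2; exact: (sep_pos (b := e) TS Dpos h2 he e1 e2).
  have monT := @mono m (fun z => val ((s^-1)%g z)) (s c.1) (s c.2).
  have {}monT : forall x y : 'I_m, (s c.1 <= x)%N -> (x <= y)%N -> (y <= s c.2)%N ->
      ((s^-1)%g x <= (s^-1)%g y)%N /\ ((x < y)%N -> ((s^-1)%g x < (s^-1)%g y)%N).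
    apply: monT => e he e1 e2.
    have eT : e \in T by apply: Tall => //; [exact: leq_trans jx e1 | exact: leq_trans e2 yi].
    by have := hT eT.
  have ey : val (s c.2) = (val (s c.1)).+1.
    apply/eqP; rewrite eqn_leq xy andbT leqNgt; apply/negP => lt.
    have zm : ((s c.1).+1 < m)%N by apply: (leq_trans lt); apply: ltnW; exact: ltn_ord.
    have [_ h1'] := monT (s c.1) (Ordinal zm) (leqnn _) (leqnSn _) (ltnW lt).
    have [_ h2'] := monT (Ordinal zm) (s c.2) (leqnSn _) (ltnW lt) (leqnn _).
    have := h1' (ltnSn _); have := h2' lt; rewrite !permK /= hc; rewrite ltnS => A B; have := leq_trans B A; by rewrite ltnn.
  by apply: Tall.
apply: (cone_swap (a := (j, i))).
rewrite Ei Ej.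
apply: (@chain m (fun x y => in_cone (T :&: S') S' (s x, s y)) _ _ j' i') => //; last exact: ltnW.
- by move=> x; apply: cone_refl.
- by move=> x y z; apply: cone_add.
- move=> c hc c1 c2; apply: cone_gen; rewrite inE core //.
  by apply: inS'; apply: blk.
Qed.
End Main.



Lemma conjE (F : fieldType) m (t : 'S_m) (A : 'M[F]_m) i j :
  (perm_mx (t^-1)%g *m A *m perm_mx t) i j = A ((t^-1)%g i) ((t^-1)%g j).
Proof. by rewrite -row_permE -[t in perm_mx t]invgK -col_permE !mxE. Qed.

Lemma invP (F : fieldType) m (t : 'S_m) : invmx (perm_mx t : 'M[F]_m) = perm_mx (t^-1)%g.
Proof.
have H : (perm_mx t *m perm_mx (t^-1)%g : 'M[F]_m) = 1%:M by rewrite -perm_mxM mulgV perm_mx1.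
by rewrite -[RHS](mulKmx (unitmx_perm _ t)) H mulmx1.
Qed.

Lemma piO0 (F : fieldType) (V : nonarch_local_field F) (pi : F) : in_piO V pi 0.
Proof. by exists 0; split; [left | rewrite mulr0]. Qed.

Lemma main_gen (F : fieldType) (V : nonarch_local_field F) (pi : F) (m : nat)
  (S T' : {set 'I_m * 'I_m}) (s : 'S_m) :
  S \subset simple_roots m ->
  T' \subset simple_roots m ->
  (forall a, a \in T' -> pos_root (weyl_act s a)) ->
  (forall a, a \in S -> pos_root (weyl_act (s^-1)%g a)) ->
  forall g : 'M[F]_m,
    (Levi_conj_parabolic s S g /\ J_ST V pi (simple_roots m) T' g) <->
    J_ST V pi (weyl_set (s^-1)%g S) (T' :&: weyl_set (s^-1)%g S) g.
Proof.
move=> SS TS hT hS g; split.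
  move=> [[p [[pU pS] ->]] [J1 J2 J3 J4]].
  have E : forall i j, (invmx (weyl_mx F s) *m p *m weyl_mx F s) i j = p ((s^-1)%g i) ((s^-1)%g j).
    by move=> i j; rewrite /weyl_mx invP conjE.
  have J3' : forall i j : 'I_m, i != j -> ~ in_cone (weyl_set (s^-1)%g S) (weyl_set (s^-1)%g S) (i, j) ->
      (invmx (weyl_mx F s) *m p *m weyl_mx F s) i j = 0.
    move=> i j ij nc; rewrite E; apply: pS; first by rewrite (inj_eq perm_inj).
    move=> hc; apply: nc; have := cone_act (s^-1)%g hc.
    by rewrite /weyl_act /= invgK !permKV.
  split => // i j ij nc.
  case: (classic (in_cone (weyl_set (s^-1)%g S) (weyl_set (s^-1)%g S) (i, j))) => hc; last first.
    by rewrite J3' //; apply: piO0.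
  apply: J4 => // hD; apply: nc; exact: coneBr.
move=> [J1 J2 J3 J4]; split; last first.
  split => // i j ij nc.
    by exfalso; apply: nc; apply: cone_all.
  case: (classic (in_cone (weyl_set (s^-1)%g S) (weyl_set (s^-1)%g S) (i, j))) => hc; last first.
    by rewrite J3 //; apply: piO0.
  apply: J4 => // hc'; apply: nc; exact: coneBl hc'.
exists (perm_mx s *m g *m perm_mx (s^-1)%g); split; last first.
  rewrite /weyl_mx invP !mulmxA -perm_mxM mulVg perm_mx1 mul1mx.
  by rewrite -mulmxA -perm_mxM mulVg perm_mx1 mulmx1.
split.
  rewrite !unitmx_mul !unitmx_perm andbT /= unitmxE unitfE; by case: J2.
move=> i j ij nc.
have := conjE ((s^-1)%g) g i j; rewrite invgK => ->.
apply: J3; first by rewrite (inj_eq perm_inj).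
move=> hc; apply: nc; have := cone_act s hc.
by rewrite wsK /weyl_act /= !permK.
Qed.

End Helpers.

Theorem lemma1p1 (F : fieldType) (V : nonarch_local_field F) (pi : F) (n : nat)
  (S T' : {set 'I_(n.*2) * 'I_(n.*2)}) (s : 'S_(n.*2)) :
  uniformizer V pi ->
  S \subset simple_roots (n.*2) ->
  T' \subset simple_roots (n.*2) ->
  (forall a, a \in T' -> pos_root (weyl_act s a)) ->
  (forall a, a \in S -> pos_root (weyl_act (s^-1)%g a)) ->
  forall g : 'M[F]_(n.*2),
    (Levi_conj_parabolic s S g /\ J_ST V pi (simple_roots (n.*2)) T' g) <->
    J_ST V pi (weyl_set (s^-1)%g S) (T' :&: weyl_set (s^-1)%g S) g.
Proof.
move=> _; exact: Helpers.main_gen.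
Qed.
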